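(* Let $\Gamma$ be a weighted digraph with vertex set $\{1,\dots,n\}$, $n>1$, without loops and with strictly positive arc weights, with Laplacian matrix $L$, matrices of in-forests $Q_k$ and in-forest weights $\sigma_k$. Then for every $k=0,1,2,\dots$, $$Q_k=\sum_{i=0}^{k}\sigma_{k-i}(-L)^i.$$
   Context: $W=(w_{ij})$ is the matrix of arc weights ($w_{ij}>0$ iff there is an arc $i\to j$, else $0$). The Laplacian $L=(\ell_{ij})$: $\ell_{ij}=-w_{ij}$ for $j\ne i$, $\ell_{ii}=\sum_{k\ne i}w_{ik}$. The weight of a subgraph is the product of its arc weights (1 if no arcs); the weight of a set of subgraphs is the sum of their weights (0 for the empty set). A converging tree is a weakly connected digraph with one vertex (the root) of outdegree 0 and all others of outdegree 1; an in-forest is a spanning subgraph of $\Gamma$ whose weak components are converging trees. $\sigma_k$ is the total weight of in-forests of $\Gamma$ with $k$ arcs ($\sigma_0=1$). $Q_k=(q^k_{ij})$ where $q^k_{ij}$ is the total weight of in-forests with $k$ arcs in which $i$ lies in a tree rooted at $j$ ($Q_0=I$). *)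

(* Defs.v *)
From mathcomp Require Import all_boot all_order all_algebra.
Set Implicit Arguments. Unset Strict Implicit. Unset Printing Implicit Defensive.
Import Order.TTheory GRing.Theory Num.Theory.
Local Open Scope ring_scope.

(* Weighted digraph on vertex set 'I_n given by its weight matrix W:
   there is an arc i -> j iff W i j != 0 (weights are positive on arcs).
   A subgraph (spanning, so on all vertices) is given by its arc set
   A : {set 'I_n * 'I_n}. *)

Section Forests.
Variables (R : realFieldType) (n : nat) (W : 'M[R]_n).

Definition laplacian : 'M[R]_n :=
  \matrix_(i, j) (if i == j then \sum_(k | k != i) W i k else - W i j).

Definition is_arc (a : 'I_n * 'I_n) : bool := W a.1 a.2 != 0.

Definition outdeg (A : {set 'I_n * 'I_n}) (v : 'I_n) : nat :=
  #|[set y | (v, y) \in A]|.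

Definition weak_adj (A : {set 'I_n * 'I_n}) : rel 'I_n :=
  [rel x y | ((x, y) \in A) || ((y, x) \in A)].

Definition wcomp (A : {set 'I_n * 'I_n}) (x : 'I_n) : {set 'I_n} :=
  [set y | connect (weak_adj A) x y].

Definition converging_tree_on (A : {set 'I_n * 'I_n}) (C : {set 'I_n}) : bool :=
  [exists r in C, (outdeg A r == 0%N) &&
     [forall v in C, (v != r) ==> (outdeg A v == 1%N)]].

Definition in_forest (A : {set 'I_n * 'I_n}) : bool :=
  [forall a in A, is_arc a] &&
  [forall x, converging_tree_on A (wcomp A x)].

Definition sweight (A : {set 'I_n * 'I_n}) : R := \prod_(a in A) W a.1 a.2.

Definition rooted_at (A : {set 'I_n * 'I_n}) (i j : 'I_n) : bool :=
  (j \in wcomp A i) && (outdeg A j == 0%N).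

Definition sigma (k : nat) : R :=
  \sum_(A : {set 'I_n * 'I_n} | in_forest A && (#|A| == k)) sweight A.

Definition Qmat (k : nat) : 'M[R]_n :=
  \matrix_(i, j) \sum_(A : {set 'I_n * 'I_n} |
      [&& in_forest A, #|A| == k & rooted_at A i j]) sweight A.

End Forests.

(* Main.v *)
Require Import Defs.
From mathcomp Require Import all_boot all_order all_algebra.
Set Implicit Arguments. Unset Strict Implicit. Unset Printing Implicit Defensive.
Import Order.TTheory GRing.Theory Num.Theory.

Section Fun.
Variable T : finType.
Implicit Types (f g h : T -> T) (x y z a b m r : T).

Lemma reachP f x y : reflect (exists t, iter t f x = y) (fconnect f x y).
Proof.
apply: (iffP idP) => [h|[t <-]]; last exact: fconnect_iter.
by exists (findex f x y); exact: iter_findex.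
Qed.

Lemma reach_fix f r y : f r = r -> fconnect f r y -> y = r.
Proof. by move=> fr /reachP[t <-]; rewrite iter_fix. Qed.

Lemma reach_step f x z : fconnect f x z -> x != z -> fconnect f (f x) z.
Proof.
move=> /reachP[[|t] <-]; first by rewrite eqxx.
by rewrite iterSr => _; apply/reachP; exists t.
Qed.

Lemma reach_cons f x z : fconnect f (f x) z -> fconnect f x z.
Proof. by apply: connect_trans; apply: fconnect1. Qed.

Lemma reach_agree f g m x y : (forall v, v != m -> g v = f v) ->
  fconnect f x y -> fconnect g x y || fconnect g x m.
Proof.
move=> hfg /reachP[t]; elim: t x => [|t IH] x.
  by move=> /= ->; rewrite connect0.
rewrite iterSr => /IH.
case: (eqVneq x m) => [->|xm]; first by rewrite connect0 orbT.
by rewrite -(hfg _ xm) => /orP[] /reach_cons ->; rewrite ?orbT.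
Qed.

Lemma reach_agree_m f g m x : (forall v, v != m -> g v = f v) ->
  fconnect f x m -> fconnect g x m.
Proof. by move=> hfg /(reach_agree hfg) /orP[]. Qed.

Lemma reach_cut (D : pred T) f h x y : (forall v, ~~ D v -> h v = f v) ->
  fconnect f x y -> D y -> exists2 d, D d & fconnect h x d.
Proof.
move=> hfh /reachP[t]; elim: t x => [|t IH] x.
  by move=> /= -> Dy; exists y => //; rewrite connect0.
rewrite iterSr => /IH hx Dy.
case Dx: (D x); first by exists x => //; rewrite connect0.
have [d Dd hd] := hx Dy; exists d => //; apply: reach_cons.
by rewrite hfh ?Dx.
Qed.

Lemma reach_two f i a b : fconnect f i a -> fconnect f i b ->
  fconnect f a b || fconnect f b a.
Proof.
move=> /reachP[t]; elim: t i => [|t IH] i.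
  by move=> /= -> ->.
rewrite iterSr => hi hib.
case: (eqVneq i b) => [eib|nib].
  by rewrite -eib (_ : fconnect f i a) ?orbT //; apply/reachP; exists t.+1; rewrite iterSr.
exact: IH hi (reach_step hib nib).
Qed.

Lemma reach_pred f i j : fconnect f i j -> i != j ->
  exists m, [/\ m != j, f m = j & fconnect f i m].
Proof.
move=> /reachP[t]; elim: t i => [|t IH] i; first by move=> /= ->; rewrite eqxx.
rewrite iterSr => hi ij.
case: (eqVneq (f i) j) => [fij|fij].
  by exists i; split => //; rewrite connect0.
have [m [mj fm hm]] := IH _ hi fij.
by exists m; split => //; apply: reach_cons.
Qed.

Definition acyc f := [forall v, [exists r, fconnect f v r && (f r == r)]].

Lemma acycP f : reflect (forall v, exists2 r, fconnect f v r & f r = r) (acyc f).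
Proof.
apply: (iffP forallP) => [h v|h v].
  by have /existsP[r /andP[h1 /eqP h2]] := h v; exists r.
by have [r h1 h2] := h v; apply/existsP; exists r; rewrite h1 h2 eqxx.
Qed.

Definition cut f b := fun v => if v == b then b else f v.

Lemma cut_agree f b v : v != b -> cut f b v = f v.
Proof. by rewrite /cut => /negbTE ->. Qed.

Lemma cut_fix f b : cut f b b = b.
Proof. by rewrite /cut eqxx. Qed.

Lemma cycle_fix f x : acyc f -> fconnect f (f x) x -> f x = x.
Proof.
move=> /acycP ac hx; have [r hr fr] := ac x.
have Z : forall u, fconnect f x u -> fconnect f u x.
  move=> u /reachP[t <-]; elim: t => [|t IH] /=; first exact: connect0.
  case: (eqVneq (iter t f x) x) => [->|ne]; first by [].
  exact: reach_step IH ne.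
by have := reach_fix fr (Z _ hr) => ->.
Qed.

Lemma Kgen f b : (forall v, exists2 r, fconnect f v r & (f r == r) || fconnect f r b) ->
  acyc (cut f b).
Proof.
move=> h; apply/acycP => v; have [r hr /orP[/eqP fr|rb]] := h v.
  have /orP[h1|h1] := reach_agree (@cut_agree f b) hr.
    by exists r => //; rewrite /cut; case: eqP.
  by exists b => //; rewrite cut_fix.
exists b; last exact: cut_fix.
by apply: (reach_agree_m (@cut_agree f b)); apply: connect_trans hr rb.
Qed.

Lemma K0 f b : acyc f -> acyc (cut f b).
Proof.
by move=> /acycP h; apply: Kgen => v; have [r h1 h2] := h v; exists r; rewrite ?h2 ?eqxx.
Qed.

Lemma cut_back f a v : v != a -> f v = cut f a v.
Proof. by move=> va; rewrite cut_agree. Qed.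

Lemma K f a b : acyc (cut f a) -> fconnect f a b -> acyc (cut f b).
Proof.
move=> /acycP h hab; apply: Kgen => v; have [r hr fr] := h v.
have /orP[h1|h1] := reach_agree (@cut_back f a) hr.
  case: (eqVneq r a) => [ra|ra].
    by exists a; [rewrite -ra | rewrite hab orbT].
  by exists r => //; move: fr; rewrite cut_agree // => ->; rewrite eqxx.
by exists a => //; rewrite hab orbT.
Qed.

Lemma LemC f m : acyc (cut f m) -> (exists2 r, fconnect f (f m) r & f r = r) -> acyc f.
Proof.
move=> /acycP h [r0 h0 f0]; apply/acycP => v; have [r hr fr] := h v.
have hm : fconnect f v m -> exists2 r, fconnect f v r & f r = r.
  by move=> vm; exists r0 => //; apply: connect_trans vm (reach_cons h0).
have /orP[h1|h1] := reach_agree (@cut_back f m) hr; last exact: hm.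
case: (eqVneq r m) => [rm|rm]; first by apply: hm; rewrite -rm.
by exists r => //; move: fr; rewrite cut_agree.
Qed.

Lemma NotAcyc f m : acyc (cut f m) -> ~~ acyc f -> fconnect f (f m) m.
Proof.
move=> ac nac; have /acycP h := ac; have [r hr fr] := h (f m).
have /orP[h1|h1] := reach_agree (@cut_back f m) hr; last by [].
case: (eqVneq r m) => [rm|rm]; first by move: h1; rewrite rm.
by move: nac; rewrite (LemC ac) //; exists r => //; move: fr; rewrite cut_agree.
Qed.


Section Count.
Variables (f : T -> T) (i j : T).

Definition Pm m := [&& m != j, f m == j, acyc (cut f m) & fconnect f i m].

Lemma Pm_uniq m1 m2 : Pm m1 -> Pm m2 -> m1 = m2.
Proof.
move=> P1 P2; apply/eqP/negPn/negP => ne.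
have H : forall ma mb, Pm ma -> Pm mb -> ma != mb -> fconnect (cut f mb) j ma -> False.
  move=> ma mb /and4P[maj /eqP fma _ _] /and4P[_ _ acb _] neab hj.
  have e : cut f mb ma = j by rewrite cut_agree.
  have := @cycle_fix (cut f mb) ma acb; rewrite e => /(_ hj) ej.
  by move: maj; rewrite ej eqxx.
have G : forall ma mb, Pm ma -> Pm mb -> ma != mb -> fconnect f ma mb -> False.
  move=> ma mb Pa Pb neab hab.
  have /and4P[_ /eqP fma _ _] := Pa.
  have hj : fconnect f j mb by rewrite -fma; apply: reach_step hab neab.
  pose D := pred2 ma mb.
  pose h := fun v => if D v then v else f v.
  have hh : forall v, ~~ D v -> h v = f v by move=> v /negbTE; rewrite /h => ->.
  have Dmb : D mb by rewrite /D /= eqxx orbT.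
  have [d Dd hd] := @reach_cut D f h _ _ hh hj Dmb.
  case/orP: Dd => /eqP ed; subst d.
    apply: (H ma mb) => //; apply: (reach_agree_m (f := h)) hd => v vma.
    rewrite /h /D /= (negbTE vma) /=; rewrite /cut; by case: eqP.
  apply: (H mb ma) => //; first by rewrite eq_sym.
  apply: (reach_agree_m (f := h)) hd => v vmb.
  rewrite /h /D /= (negbTE vmb) orbF /cut; by case: eqP.
have /and4P[_ _ _ h1] := P1; have /and4P[_ _ _ h2] := P2.
case/orP: (reach_two h1 h2) => h.
  exact: G P1 P2 ne h.
by apply: G P2 P1 _ h; rewrite eq_sym.
Qed.

Lemma card_Pm : #|Pm| = [exists m, Pm m].
Proof.
case: existsP => [[m Pmm]|none].
  rewrite (eq_card (B := pred1 m)) ?card1 // => x; rewrite !inE.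
  apply/idP/eqP => [Px|->//]; exact: Pm_uniq.
by apply: eq_card0 => x; rewrite inE; apply/negP => Px; apply: none; exists x.
Qed.

Lemma E_acyc : acyc f -> [exists m, Pm m] = fconnect f i j && (i != j).
Proof.
move=> ac; apply/existsP/andP => [[m /and4P[mj /eqP fm _ im]]|[ij nij]].
  have ij : fconnect f i j by apply: connect_trans im _; rewrite -fm fconnect1.
  split => //; apply/negP => /eqP eij; move: im; rewrite eij => jm.
  have := @cycle_fix f m ac; rewrite fm => /(_ jm) e.
  by move: mj; rewrite -e eqxx.
have [m [mj fm im]] := reach_pred ij nij.
by exists m; apply/and4P; split => //; [rewrite fm | apply: K0].
Qed.

Lemma E_fix_nacyc : f j = j -> ~~ acyc f -> [exists m, Pm m] = false.
Proof.
move=> fj nac; apply/existsP => [[m /and4P[mj /eqP fm acm _]]].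
have : acyc f by apply: (LemC acm); exists j => //; rewrite fm connect0.
by rewrite (negbTE nac).
Qed.

Lemma E_nfix_nacyc : f j != j -> ~~ acyc f ->
  [exists m, Pm m] = acyc (cut f j) && fconnect f i j.
Proof.
move=> fj nac; apply/existsP/andP => [[m /and4P[mj /eqP fm acm im]]|[acj ij]].
  have mj' : fconnect f m j by rewrite -fm fconnect1.
  by split; [apply: K acm mj' | apply: connect_trans im mj'].
have jj := NotAcyc acj nac.
have [m [mj fm jm]] := reach_pred jj fj.
exists m; apply/and4P; split => //; first by rewrite fm.
  exact: (K acj (reach_cons jm)).
exact: connect_trans ij (reach_cons jm).
Qed.

Lemma count_id :
  ((acyc f && fconnect f i j && (f j == j)) : nat) +
  ((f j != j) && acyc (cut f j) && fconnect f i j) =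
  ((i == j) && acyc f) + #|Pm|.
Proof.
rewrite card_Pm.
case: (boolP (acyc f)) => ac.
  rewrite E_acyc // K0 //=.
  case: (eqVneq i j) => [<-|nij]; first by rewrite connect0; case: eqP.
  by rewrite /= andbT; case: eqP; case: (fconnect f i j).
case: (eqVneq (f j) j) => [fj|fj].
  by rewrite E_fix_nacyc //= andbF.
by rewrite E_nfix_nacyc //= andbF.
Qed.

End Count.
End Fun.

Lemma fc_cut (T : finType) (f : T -> T) i m : fconnect (cut f m) i m = fconnect f i m.
Proof.
apply/idP/idP; [apply: reach_agree_m; exact: cut_back | apply: reach_agree_m; exact: cut_agree].
Qed.

Local Open Scope ring_scope.

Section Bridge.
Variables (R : realFieldType) (n : nat) (W : 'M[R]_n).
Hypothesis hloop : forall i, W i i = 0.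

Local Notation T := 'I_n.
Local Notation F := {ffun 'I_n -> 'I_n}.

Definition Sset (f : F) : {set T * T} := [set (v, f v) | v in [set v | f v != v]].
Definition par (A : {set T * T}) : F := [ffun v => odflt v [pick y | (v, y) \in A]].
Definition sz (f : F) := #|[set v | f v != v]|.
Definition wt (f : F) : R := \prod_(v | f v != v) W v (f v).

Lemma mem_S f x y : ((x, y) \in Sset f) = (f x != x) && (f x == y).
Proof.
apply/imsetP/andP => [[v]|[h /eqP <-]]; last by exists x; rewrite ?inE.
by rewrite inE => fv [-> ->].
Qed.

Lemma card_S f : #|Sset f| = sz f.
Proof. by rewrite card_imset // => u v [] . Qed.

Lemma sweight_S f : sweight W (Sset f) = wt f.
Proof.
rewrite /sweight big_imset /=; last by move=> u v _ _ [].
by apply: eq_bigl => v; rewrite inE.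
Qed.

Lemma outdeg_S f v : outdeg (Sset f) v = (f v != v).
Proof.
rewrite /outdeg; case h: (f v != v).
  rewrite (eq_card (B := pred1 (f v))) ?card1 // => y.
  by rewrite !inE mem_S h eq_sym.
by apply: eq_card0 => y; rewrite !inE mem_S h.
Qed.

Lemma weak_S f x y : weak_adj (Sset f) x y =
  ((f x != x) && (f x == y)) || ((f y != y) && (f y == x)).
Proof. by rewrite /weak_adj /= !mem_S. Qed.

Lemma arc_reach (f : F) r x y : f r = r -> f x != x -> f x = y ->
  fconnect f x r = fconnect f y r.
Proof.
move=> fr fx <-; apply/idP/idP => [h|]; last exact: reach_cons.
apply: reach_step h _; apply/eqP => xr; move: fx; by rewrite xr fr eqxx.
Qed.

Lemma closed_S (f : F) r : f r = r ->
  forall x y, connect (weak_adj (Sset f)) x y -> fconnect f x r = fconnect f y r.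
Proof.
move=> fr x y; apply: (@closed_connect _ _ [pred u | fconnect f u r]) => u v.
rewrite weak_S => /orP[]/andP[h1 /eqP h2] /=; first exact: arc_reach.
by apply/esym; apply: arc_reach.
Qed.

Lemma fconnect_weak (f : F) x y : fconnect f x y -> connect (weak_adj (Sset f)) x y.
Proof.
apply: connect_sub => u v /eqP <-; case: (eqVneq (f u) u) => [->|h].
  exact: connect0.
by apply: connect1; rewrite weak_S h eqxx.
Qed.

Lemma rooted_S (f : F) i j : rooted_at (Sset f) i j = fconnect f i j && (f j == j).
Proof.
rewrite /rooted_at /wcomp inE outdeg_S; case: (eqVneq (f j) j) => [fj|fj] /=;
  last by rewrite !andbF.
rewrite !andbT; apply/idP/idP; last exact: fconnect_weak.
by move=> /(closed_S fj) ->; rewrite connect0.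
Qed.

Definition arcs_ok (f : F) := [forall v, (f v != v) ==> (W v (f v) != 0)].

Lemma in_forest_S (f : F) : in_forest W (Sset f) = arcs_ok f && acyc f.
Proof.
rewrite /in_forest; congr andb.
  apply/forall_inP/forallP => [h v|h [x y]]; first (apply/implyP => fv).
    by have := h (v, f v); rewrite mem_S fv eqxx => /(_ isT).
  by rewrite mem_S => /andP[fx /eqP <-]; have /implyP := h x; apply.
apply/forallP/acycP => [h v|h x].
  have /existsP[r /and3P[rC /eqP r0 _]] := h v.
  move: rC; rewrite /wcomp inE => vr.
  move: r0; rewrite outdeg_S; case: (eqVneq (f r) r) => // fr _.
  by exists r => //; rewrite (closed_S fr vr) connect0.
have [r xr fr] := h x; apply/existsP; exists r.
rewrite /wcomp inE (fconnect_weak xr) outdeg_S fr eqxx /=.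
apply/forall_inP => v; rewrite inE => xv; apply/implyP => vr.
rewrite outdeg_S; case: (eqVneq (f v) v) => // fv.
have := closed_S fr xv; rewrite xr => /esym /(reach_fix fv) rv.
by move: vr; rewrite rv eqxx.
Qed.

Lemma par_S f : par (Sset f) = f.
Proof.
apply/ffunP => v; rewrite ffunE; case: pickP => [y|none] /=.
  by rewrite mem_S => /andP[_ /eqP].
case: (eqVneq (f v) v) => // fv.
by have := none (f v); rewrite mem_S fv eqxx.
Qed.

Lemma S_par A : in_forest W A -> Sset (par A) = A.
Proof.
move=> /andP[/forall_inP arcs /forallP tr].
have loopfree : forall x y, (x, y) \in A -> x != y.
  move=> x y /arcs; rewrite /is_arc /=; apply: contra => /eqP ->.
  by rewrite hloop.
have le1 : forall x, (outdeg A x <= 1)%N.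
  move=> x; have /existsP[r /andP[_ /andP[/eqP r0 /forall_inP h]]] := tr x.
  case: (eqVneq x r) => [->|xr]; first by rewrite r0.
  have hx : x \in wcomp A x by rewrite inE connect0.
  by move: (h x hx); rewrite xr => /eqP ->.
apply/setP => -[x y]; rewrite mem_S ffunE.
case: pickP => [z hz|none] /=; last by rewrite eqxx /= none.
rewrite eq_sym (loopfree _ _ hz) /=.
apply/eqP/idP => [<-//|hy].
have /card_le1_eqP := le1 x; apply; by rewrite inE.
Qed.


Lemma sum_sets (P : pred {set T * T}) (G : {set T * T} -> R) :
  (forall A, P A -> in_forest W A) ->
  \sum_(A | P A) G A = \sum_(f : F | P (Sset f)) G (Sset f).
Proof.
move=> hP; rewrite (reindex_onto Sset par) => [|A /hP]; last exact: S_par.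
by apply: eq_bigl => f; rewrite par_S eqxx andbT.
Qed.

Lemma drop_arcs (X : pred F) :
  \sum_(f : F | in_forest W (Sset f) && X f) wt f = \sum_(f : F | acyc f && X f) wt f.
Proof.
rewrite big_mkcond [RHS]big_mkcond; apply: eq_bigr => f _.
rewrite in_forest_S; case ok: (arcs_ok f) => //=.
case: (acyc f && X f) => //.
move/negbT: ok => /forallPn [v]; rewrite negb_imply negbK => /andP[fv /eqP w0].
by rewrite /wt (bigD1 v) //= w0 mul0r.
Qed.

Lemma sigmaE k : sigma W k = \sum_(f : F | acyc f && (sz f == k)) wt f.
Proof.
rewrite /sigma (@sum_sets (fun A => in_forest W A && (#|A| == k))) => [|A /andP[]//].
rewrite -drop_arcs; apply: eq_big => [f|f _]; by rewrite ?card_S ?sweight_S.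
Qed.

Lemma QmatE k i j : Qmat W k i j =
  \sum_(f : F | acyc f && ((sz f == k) && (fconnect f i j && (f j == j)))) wt f.
Proof.
rewrite mxE (@sum_sets (fun A => [&& in_forest W A, #|A| == k & rooted_at A i j]))
  => [|A /andP[]//].
rewrite -drop_arcs; apply: eq_big => [f|f _]; by rewrite ?card_S ?sweight_S ?rooted_S.
Qed.


Definition upd (g : F) a b : F := [ffun v => if v == a then b else g v].

Lemma upd_cut (g : F) a : upd g a a =1 cut g a.
Proof. by move=> v; rewrite ffunE /cut. Qed.

Lemma acyc_ext (f g : T -> T) : f =1 g -> acyc f = acyc g.
Proof.
move=> e; apply: eq_forallb => v; apply: eq_existsb => r.
by rewrite (eq_fconnect e) e.
Qed.

Lemma wt_upd (g : F) a b : g a = a -> a != b -> wt (upd g a b) = W a b * wt g.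
Proof.
move=> ga ab; rewrite /wt (bigD1 a) /=; last by rewrite ffunE eqxx eq_sym.
rewrite ffunE eqxx; congr (_ * _).
apply: eq_big => [v|v /andP[_ va]]; last by rewrite ffunE (negbTE va).
rewrite ffunE; case: (eqVneq v a) => [->|va] /=; by rewrite ?ga ?eqxx ?andbT ?andbF.
Qed.

Lemma sz_upd (g : F) a b : g a = a -> a != b -> sz (upd g a b) = (sz g).+1.
Proof.
move=> ga ab; rewrite /sz (_ : [set v | upd g a b v != v] = a |: [set v | g v != v]).
  by rewrite cardsU1 inE ga eqxx.
apply/setP => v; rewrite !inE ffunE; case: (eqVneq v a) => [->|va] //=.
by rewrite eq_sym.
Qed.

Lemma upd_upd (g : F) a b c : upd (upd g a b) a c = upd g a c.
Proof. by apply/ffunP => v; rewrite !ffunE; case: eqP. Qed.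

Lemma upd_id (g : F) a : g a = a -> upd g a a = g.
Proof. by move=> ga; apply/ffunP => v; rewrite !ffunE; case: eqP => // ->. Qed.

Lemma upd_eq (g : F) a : (upd g a a == g) = (g a == a).
Proof.
apply/eqP/eqP => [/ffunP /(_ a)|]; [by rewrite ffunE eqxx => <- | exact: upd_id].
Qed.

Lemma upd_restore (g : F) a b : g a = b -> upd (upd g a a) a b = g.
Proof. by move=> gab; apply/ffunP => v; rewrite !ffunE; case: eqP => // ->. Qed.

Lemma sz_cut_iff (g : F) a k : g a != a -> (sz (upd g a a) == k) = (sz g == k.+1).
Proof.
move=> ga; have h : sz g = (sz (upd g a a)).+1.
  rewrite -{1}(@upd_restore g a (g a)) //; apply: sz_upd; first by rewrite ffunE eqxx.
  by rewrite eq_sym.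
by rewrite h eqSS.
Qed.

Lemma R1 (P : pred F) a b : a != b ->
  \sum_(f : F | P f && (f a == a)) wt f * W a b =
  \sum_(g : F | P (upd g a a) && (g a == b)) wt g.
Proof.
move=> ab; rewrite [RHS](reindex_onto (fun f => upd f a b) (fun g => upd g a a)) /=;
  last by move=> g /andP[_ /eqP]; exact: upd_restore.
apply: eq_big => [f|f /andP[_ /eqP fa]]; last by rewrite wt_upd // mulrC.
rewrite upd_upd upd_eq ffunE !eqxx andbT.
by case: (eqVneq (f a) a) => [fa|]; rewrite ?andbF // upd_id.
Qed.


Lemma sum_ind (b : pred F) : \sum_(g : F | b g) wt g = \sum_(g : F) wt g *+ b g.
Proof. by rewrite big_mkcond; apply: eq_bigr => g _; case: (b g). Qed.

Section Main.
Variables (k : nat) (i j : T).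

Definition c1 (g : F) : nat := acyc g && ((sz g == k.+1) && (fconnect g i j && (g j == j))).
Definition Xm (g : F) (m : T) : bool :=
  acyc (upd g m m) && (sz (upd g m m) == k) && fconnect (upd g m m) i m.
Definition c2 (g : F) : nat := (g j != j) && Xm g j.
Definition c3 (g : F) : nat := #|[pred m | (m != j) && (Xm g m && (g m == j))]|.
Definition c4 (g : F) : nat := (i == j) && (acyc g && (sz g == k.+1)).

Lemma T1 : Qmat W k.+1 i j = \sum_(g : F) wt g *+ c1 g.
Proof. by rewrite QmatE sum_ind. Qed.

Lemma T4 : sigma W k.+1 * (i == j)%:R = \sum_(g : F) wt g *+ c4 g.
Proof.
rewrite sigmaE sum_ind mulr_suml; apply: eq_bigr => g _; rewrite /c4.
by case: (i == j); case: (_ && _); rewrite /= ?mulr1 ?mulr0 ?mulr0n.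
Qed.

Lemma T2 : Qmat W k i j * \sum_(y | y != j) W j y = \sum_(g : F) wt g *+ c2 g.
Proof.
pose P := fun f : F => acyc f && (sz f == k) && fconnect f i j.
have -> : Qmat W k i j = \sum_(f : F | P f && (f j == j)) wt f.
  by rewrite QmatE; apply: eq_bigl => f; rewrite /P !andbA.
rewrite mulr_sumr (eq_bigr (fun y => \sum_(g : F | P (upd g j j) && (g j == y)) wt g));
  last by move=> y yj; rewrite mulr_suml R1 // eq_sym.
rewrite (eq_bigr (fun y => \sum_(g : F) (if P (upd g j j) && (g j == y) then wt g else 0)));
  last by move=> y _; rewrite big_mkcond.
rewrite exchange_big; apply: eq_bigr => g _.
rewrite -big_mkcondr /c2 /Xm.
case: (eqVneq (g j) j) => [gj|gj] /=.
  rewrite big_pred0 // => y; rewrite gj.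
  by case: (eqVneq y j) => //=; rewrite andbF.
rewrite -/(P (upd g j j)); case: (P (upd g j j)) => /=; last by rewrite big_pred0 // => y; rewrite andbF.
rewrite (big_pred1 (g j)) // => y /=.
by case: (eqVneq y (g j)) => [->|] //=; rewrite ?gj ?andbF.
Qed.

Lemma T3 : \sum_(m | m != j) Qmat W k i m * W m j = \sum_(g : F) wt g *+ c3 g.
Proof.
pose P := fun m (f : F) => acyc f && (sz f == k) && fconnect f i m.
rewrite (eq_bigr (fun m => \sum_(g : F | P m (upd g m m) && (g m == j)) wt g)); last first.
  move=> m mj; rewrite QmatE mulr_suml -R1 //.
  by apply: eq_bigl => f; rewrite /P !andbA.
rewrite (eq_bigr (fun m => \sum_(g : F) (if P m (upd g m m) && (g m == j) then wt g else 0)));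
  last by move=> m _; rewrite big_mkcond.
rewrite exchange_big; apply: eq_bigr => g _.
rewrite -big_mkcondr /c3 -sumr_const.
by apply: eq_bigl => m; rewrite inE.
Qed.

Lemma count_g (g : F) : (c1 g + c2 g = c4 g + c3 g)%N.
Proof.
rewrite /c1 /c2 /c3 /c4.
have conv : forall m, g m != m ->
  Xm g m =
  acyc (cut g m) && (sz g == k.+1) && fconnect g i m.
  move=> m gm; rewrite /Xm (acyc_ext (upd_cut g m)) (eq_fconnect (upd_cut g m)) fc_cut.
  by rewrite sz_cut_iff.
case hs: (sz g == k.+1); last first.
  rewrite !(andFb, andbF) /=.
  rewrite eq_card0 => [|m]; last first.
    rewrite inE; case: (eqVneq m j) => //= mj; case: (eqVneq (g m) j) => gm; rewrite ?andbF //.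
    have gmm : g m != m by rewrite gm eq_sym.
    by rewrite (conv m gmm) hs andbF.
  by case: (eqVneq (g j) j) => //= gj; rewrite conv // hs andbF.
rewrite !andbT.
have -> : #|[pred m | (m != j) && (Xm g m && (g m == j))]| = #|Pm g i j|.
  apply: eq_card => m; rewrite !inE unfold_in /Pm /=.
  case: (eqVneq m j) => //= mj; case: (eqVneq (g m) j) => gm; rewrite ?andbF //.
  by rewrite conv ?hs ?andbT // gm eq_sym.
rewrite andTb -count_id andbA; congr addn.
by case: (eqVneq (g j) j) => //= gj; rewrite conv // hs andbT.
Qed.

End Main.

Lemma recur k : Qmat W k.+1 = sigma W k.+1 *: 1%:M - Qmat W k *m laplacian W.
Proof.
apply/matrixP => i j; rewrite T1.
set Q := Qmat W k; set L := laplacian W.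
rewrite !mxE (bigD1 j) //=.
have Ljj : L j j = \sum_(y | y != j) W j y by rewrite /L mxE eqxx.
have S : \sum_(m | m != j) Q i m * L m j = - \sum_(m | m != j) Q i m * W m j.
  have Lmj : forall m, m != j -> L m j = - W m j by move=> m mj; rewrite /L mxE (negbTE mj).
  by rewrite -sumrN; apply: eq_bigr => m mj; rewrite Lmj // mulrN.
rewrite S Ljj /Q T3 T2.
have E : \sum_(g : F) wt g *+ c1 k i j g + \sum_(g : F) wt g *+ c2 k i j g =
         \sum_(g : F) wt g *+ c4 k i j g + \sum_(g : F) wt g *+ c3 k i j g.
  rewrite -!big_split; apply: eq_bigr => g _.
  change (wt g *+ c1 k i j g + wt g *+ c2 k i j g = wt g *+ c4 k i j g + wt g *+ c3 k i j g).
  by rewrite -!mulrnDr count_g.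
by rewrite T4 opprB addrA -E addrK.
Qed.


Lemma base : Qmat W 0 = sigma W 0 *: 1%:M.
Proof.
apply/matrixP => i j; rewrite QmatE !mxE sigmaE.
have idf : forall f : F, sz f == 0%N -> forall v, f v = v.
  move=> f; rewrite /sz cards_eq0 => /eqP e v; apply/eqP/negPn/negP => h.
  have : v \in [set v | f v != v] by rewrite inE.
  by rewrite e inE.
case: (eqVneq i j) => [<-|ij]; rewrite ?mulr1 ?mulr0.
  apply: eq_bigl => f; case: (boolP (sz f == 0%N)) => [h|]; last by rewrite !andbF.
  by rewrite idf // eqxx connect0 !andbT.
apply: big_pred0 => f; case: (boolP (sz f == 0%N)) => [h|]; last by rewrite !andbF.
case: (boolP (fconnect f i j)) => [hc|]; last by rewrite !andbF.
by move: ij; rewrite (reach_fix (idf f h i) hc) eqxx.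
Qed.

End Bridge.

Theorem proposition6 (R : realFieldType) (n : nat) (hn : (1 < n)%N)
    (W : 'M[R]_n)
    (hpos : forall i j, 0 <= W i j)
    (hloop : forall i, W i i = 0)
    (k : nat) :
  Qmat W k = \sum_(i < k.+1) sigma W (k - i) *: (- laplacian W) ^+ i.
Proof.
elim: k => [|k IH].
  by rewrite big_ord1 subn0 expr0 -idmxE; exact: base.
rewrite (recur hloop) IH [RHS]big_ord_recl subn0 expr0 idmxE mulmxE -mulrN mulr_suml.
congr (_ + _); apply: eq_bigr => i _.
by rewrite -mulmxE -scalemxAl mulmxE -exprSr lift0 subSS.
Qed.
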